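(* Let $H$ and $K$ be finite groups such that at least one of them is solvable. Then $\mathrm{MaxDim}(H \times K) = \mathrm{MaxDim}(H) + \mathrm{MaxDim}(K)$.
   Context: All groups are finite. A finite set $\{H_1,\dots,H_n\}$ of subgroups of a group $G$ is in general position if for every $1 \le j \le n$, $\bigcap_{i \neq j} H_i \supsetneq \bigcap_{i} H_i$. $\mathrm{MaxDim}(G)$ is the largest cardinality of a collection of maximal subgroups of $G$ that is in general position. *)

(* Defs.v *)
From mathcomp Require Import all_boot all_fingroup all_solvable.
Set Implicit Arguments. Unset Strict Implicit. Unset Printing Implicit Defensive.
Local Open Scope group_scope.

(* Intersection of a family F of subsets of G, taken inside G
   (so the empty intersection is G itself). *)
Definition capG (gT : finGroupType) (G : {set gT}) (F : {set {set gT}}) : {set gT} :=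
  G :&: \bigcap_(X in F) X.

Definition gen_pos (gT : finGroupType) (G : {set gT}) (F : {set {set gT}}) : bool :=
  [forall X in F, capG G F \proper capG G (F :\ X)].

Definition MaxDim (gT : finGroupType) (G : {set gT}) : nat :=
  \max_(F : {set {set gT}} | [forall X in F, maximal X G] && gen_pos G F) #|F|.

(* Main.v *)
Require Import Defs.
From mathcomp Require Import all_boot all_fingroup all_solvable.
From mathcomp Require Import zify.
Set Implicit Arguments. Unset Strict Implicit. Unset Printing Implicit Defensive.
Local Open Scope group_scope.

Section Generic.
Variable gT : finGroupType.
Implicit Types (G : {set gT}) (F : {set {set gT}}).

Lemma in_capG G F x : (x \in capG G F) = (x \in G) && [forall X in F, x \in X].
Proof.
rewrite /capG inE; congr (_ && _); apply/bigcapP/forall_inP => //.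
Qed.

Definition wit G F (X : {set gT}) g :=
  [/\ g \in G, g \notin X & forall Y, Y \in F -> Y != X -> g \in Y].

Lemma gpP G F : gen_pos G F <-> forall X, X \in F -> exists g, wit G F X g.
Proof.
split.
- move/forall_inP => h X XF; have /properP [_ [g g1 g2]] := h X XF.
  move: g1; rewrite in_capG => /andP [gG /forall_inP gY].
  exists g; split => //.
  + apply: contra g2 => gX; rewrite in_capG gG; apply/forall_inP => Y YF.
    case: (eqVneq Y X) => [->//|YX]; apply: gY; by rewrite !inE YX YF.
  + by move=> Y YF YX; apply: gY; rewrite !inE YX YF.
- move=> h; apply/forall_inP => X XF; have [g [gG gX gY]] := h X XF.
  apply/properP; split.
  + apply/subsetP => x; rewrite !in_capG => /andP[-> /forall_inP xa].
    by apply/forall_inP => Y; rewrite inE => /andP[_ YF]; apply: xa.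
  + exists g.
      rewrite in_capG gG; apply/forall_inP => Y; rewrite !inE => /andP [YX YF].
      exact: gY.
    rewrite in_capG gG /=; apply/negP => /forall_inP h'.
    by rewrite h' in gX.
Qed.

Lemma MaxDim_ub G F :
  [forall X in F, maximal X G] -> gen_pos G F -> #|F| <= MaxDim G.
Proof.
move=> h1 h2; rewrite /MaxDim.
by apply: (leq_bigmax_cond F); rewrite h1 h2.
Qed.

Lemma MaxDim_ex G : exists F,
  [/\ [forall X in F, maximal X G], gen_pos G F & #|F| = MaxDim G].
Proof.
have P0 : [forall X in (set0 : {set {set gT}}), maximal X G] && gen_pos G set0.
  apply/andP; split; apply/forall_inP => X; by rewrite inE.
have := @eq_bigmax_cond _ 
  (fun F : {set {set gT}} => [forall X in F, maximal X G] && gen_pos G F)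
  (fun F => #|F|).
case.
  by apply/card_gt0P; exists set0.
move=> F; rewrite unfold_in => /andP [h1 h2] e; exists F; split => //.
Qed.

Lemma max_group X (G : {set gT}) : maximal X G -> exists H : {group gT}, X = H.
Proof.
move/maxsetp => /andP [gX _]; by exists (Group gX).
Qed.

Lemma subfam_gp (G : {set gT}) F F' : F' \subset F -> gen_pos G F -> gen_pos G F'.
Proof.
move=> sF /gpP h; apply/gpP => X XF'.
have [g [g1 g2 g3]] := h X (subsetP sF X XF').
exists g; split => // Y YF YX; apply: g3 => //; exact: (subsetP sF).
Qed.

Lemma max_join (G M X : {group gT}) :
  maximal M G -> X \subset G -> ~~ (X \subset M) -> M <*> X = G.
Proof.
case/maxgroupP => /andP[sMG _] mx sXG nXM.
apply/eqP; rewrite eqEproper join_subG sMG sXG /=.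
apply/negP => pr.
have e := mx (M <*> X)%G pr (joing_subl M X).
by move: nXM; rewrite -e /= joing_subr.
Qed.

Lemma exchange (G : {group gT}) F M (M' : {group gT}) r :
  [forall X in F, maximal X G] -> gen_pos G F -> M \in F ->
  M' <| G -> maximal M' G -> r \in G -> r \notin M' ->
  (forall Y, Y \in F -> Y != M -> r \in Y) ->
  [/\ [forall X in (gval M' |: (F :\ M)), maximal X G],
      gen_pos G (gval M' |: (F :\ M)) & #|gval M' |: (F :\ M)| = #|F|].
Proof.
move=> /forall_inP mF /gpP gF MF nM' mM' rG rM' rY.
have M'F : gval M' \notin F :\ M.
  rewrite !inE; apply/negP => /andP [h1 h2].
  by rewrite (rY _ h2 h1) in rM'.
split.
- apply/forall_inP => X; rewrite !inE => /orP [/eqP -> //|/andP [_ XF]].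
  exact: mF.
- apply/gpP => X; rewrite !inE => /orP [/eqP ->|/andP [XM XF]].
    exists r; split => // Y; rewrite !inE => /orP [/eqP -> |/andP [YM YF]].
      by rewrite eqxx.
    by move=> _; apply: rY.
  have [g [gG gX gY]] := gF X XF.
  have [XG eX] := max_group (mF X XF).
  have e : M' <*> <[r]> = G.
    apply: max_join => //; first by rewrite cycle_subG.
    by rewrite cycle_subG.
  have : g \in M' * <[r]>.
    by rewrite -norm_joinEr ?e // (subset_trans _ (normal_norm nM')) // cycle_subG.
  case/mulsgP => m c mM /cycleP [i ->] gmc.
  have ciX : (r ^+ i)^-1 \in X.
    by rewrite eX groupV groupX // -eX; apply: rY.
  exists m; split.
  + by rewrite (subsetP (normal_sub nM')).
  + apply: contra gX => mX; rewrite gmc eX groupM // -?eX //.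
    by rewrite eX groupX // -eX; apply: rY.
  + move=> Y; rewrite !inE => /orP [/eqP -> //|/andP [YM YF]] YX.
    have [YG eY] := max_group (mF Y YF).
    have : g * (r ^+ i)^-1 \in Y.
      rewrite eY groupM // -?eY; first exact: gY.
      by rewrite eY groupV groupX // -eY; apply: rY.
    by rewrite gmc mulgK.
- rewrite cardsU1 M'F (cardsD1 M F) MF /=; by rewrite add1n.
Qed.

End Generic.

Set Default Proof Using "All".
Section Decomp.
Variables (gT : finGroupType) (G Hs Ks M : {group gT}).
Hypotheses (defG : Hs \x Ks = G) (maxM : maximal M G)
  (nHM : ~~ (Hs \subset M)) (nKM : ~~ (Ks \subset M)).

Lemma sMG : M \subset G.
Proof. by case/maxgroupP: maxM => /andP[]. Qed.

Lemma MKG : M * Ks = G.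
Proof.
have [_ nsKG] := dprod_normal2 defG.
rewrite -norm_joinEl; last by rewrite (subset_trans sMG) ?normal_norm.
by apply: max_join => //; apply: normal_sub.
Qed.

Lemma MHG : M * Hs = G.
Proof.
have [nsHG _] := dprod_normal2 defG.
rewrite -norm_joinEl; last by rewrite (subset_trans sMG) ?normal_norm.
by apply: max_join => //; apply: normal_sub.
Qed.

Lemma nsN1 : (M :&: Hs) <| G.
Proof.
have [_ HK cHK tiHK] := dprodP defG.
have [nsHG nsKG] := dprod_normal2 defG.
rewrite /normal (subset_trans (subsetIr _ _) (normal_sub nsHG)) /=.
rewrite -MKG mul_subG //.
  by rewrite normsI ?normG // (subset_trans sMG) ?normal_norm.
apply: (subset_trans cHK); apply: (subset_trans _ (cent_sub _)).
by apply: centS; apply: subsetIr.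
Qed.

Lemma maxnormal_N1 : maxnormal (M :&: Hs) Hs Hs.
Proof.
have [_ HK cHK tiHK] := dprodP defG.
have [nsHG nsKG] := dprod_normal2 defG.
have sHG := normal_sub nsHG.
apply/maxgroupP; split.
  rewrite (subset_trans sHG) ?normal_norm ?nsN1 // andbT.
  rewrite properEneq subsetIr andbT; apply: contra nHM => /eqP <-.
  exact: subsetIl.
move=> C /andP [pC nC] sNC.
have sCH := proper_sub pC.
have nsCG : C <| G.
  rewrite /normal (subset_trans sCH sHG) /= -(dprodW defG) mul_subG //.
  apply: (subset_trans cHK); apply: (subset_trans _ (cent_sub _)).
  exact: centS.
case sCM : (C \subset M).
  by apply/eqP; rewrite eqEsubset sNC subsetI sCM sCH.
have e : M <*> C = G by apply: max_join; rewrite ?sCM ?(normal_sub nsCG).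
rewrite norm_joinEl in e; last by rewrite (subset_trans sMG) ?normal_norm.
exfalso; move: pC; rewrite properE => /andP [_]; apply/negP/negPn.
apply/subsetP => h hH.
have : h \in M * C by rewrite e (subsetP sHG).
case/mulsgP => m c mM cC eh; rewrite eh in hH *.
rewrite groupMr // (subsetP sNC) // inE mM.
by rewrite -(groupMr m (subsetP sCH c cC)).
Qed.

Lemma cardG_HK : #|G| = (#|Hs| * #|Ks|)%N.
Proof.
have [_ HK cHK tiHK] := dprodP defG.
by rewrite -HK TI_cardMg.
Qed.

Lemma cardM_H : #|M| = (#|Ks| * #|M :&: Hs|)%N.
Proof.
have := mul_cardG M Hs; rewrite MHG cardG_HK -mulnA mulnC => /eqP.
by rewrite eqn_pmul2l ?cardG_gt0 // => /eqP.
Qed.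

Lemma cardM_K : #|M| = (#|Hs| * #|M :&: Ks|)%N.
Proof.
have := mul_cardG M Ks; rewrite MKG cardG_HK [(#|Hs| * _)%N]mulnC -mulnA mulnC => /eqP.
by rewrite eqn_pmul2l ?cardG_gt0 // => /eqP.
Qed.

Lemma idx_eq : #|Hs : M :&: Hs| = #|Ks : M :&: Ks|.
Proof.
have e1 := Lagrange (subsetIr M Hs).
have e2 := Lagrange (subsetIr M Ks).
have p1 := cardG_gt0 (M :&: Hs)%G.
have p2 := cardG_gt0 (M :&: Ks)%G.
have e3 := cardM_H; have e4 := cardM_K.
set n1 := #|M :&: Hs| in e1 e3 p1; set n2 := #|M :&: Ks| in e2 e4 p2.
set i1 := #|Hs : _| in e1 *; set i2 := #|Ks : _| in e2 *.
have pp : (0 < n1 * n2)%N by rewrite muln_gt0 p1 p2.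
apply/eqP; rewrite -(eqn_pmul2l pp); apply/eqP.
rewrite -e1 -e2 in e3 e4; nia.
Qed.

End Decomp.

Section Decomp2.
Variables (gT : finGroupType) (G Hs Ks M : {group gT}).
Hypotheses (defG : Hs \x Ks = G) (maxM : maximal M G)
  (nHM : ~~ (Hs \subset M)) (nKM : ~~ (Ks \subset M)).

Lemma defG' : Ks \x Hs = G. Proof. by rewrite dprodC. Qed.

Lemma prime_idx : solvable Hs || solvable Ks -> prime #|Hs : M :&: Hs|.
Proof.
case/orP => sol.
  exact: index_maxnormal_sol_prime sol (maxnormal_N1 defG maxM nHM nKM).
rewrite (idx_eq defG maxM nHM nKM).
exact: index_maxnormal_sol_prime sol (maxnormal_N1 defG' maxM nKM nHM).
Qed.

Lemma M1_props : solvable Hs || solvable Ks ->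
  [/\ (M :&: Hs) <*> Ks <| G, maximal ((M :&: Hs) <*> Ks) G
    & Ks \subset (M :&: Hs) <*> Ks].
Proof.
move=> sol.
have [_ HK cHK tiHK] := dprodP defG.
have [nsHG nsKG] := dprod_normal2 defG.
have n1 := nsN1 defG maxM nHM nKM.
have nsM1 := normalY n1 nsKG.
split => //; last exact: joing_subr.
apply: p_index_maximal; first exact: normal_sub.
have e : (M :&: Hs) <*> Ks = (M :&: Hs) * Ks.
  by rewrite norm_joinEr // (subset_trans (normal_sub nsKG)) ?normal_norm.
have ti : (M :&: Hs) :&: Ks = 1.
  by apply/trivgP; rewrite -tiHK setSI // subsetIr.
have c1 : #|(M :&: Hs) <*> Ks| = (#|M :&: Hs| * #|Ks|)%N by rewrite e TI_cardMg.
have l1 := Lagrange (normal_sub nsM1).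
have l2 := Lagrange (subsetIr M Hs).
have cG := cardG_HK defG maxM nHM nKM.
have p1 := cardG_gt0 (M :&: Hs)%G.
have p2 := cardG_gt0 Ks.
have -> : #|G : (M :&: Hs) <*> Ks| = #|Hs : M :&: Hs|; last exact: prime_idx.
have pp : (0 < #|M :&: Hs| * #|Ks|)%N by rewrite muln_gt0 p1 p2.
apply/eqP; rewrite -(eqn_pmul2l pp); apply/eqP.
by rewrite -c1 l1 cG -l2 c1 mulnAC.
Qed.

Lemma M12_sub : ((M :&: Hs) <*> Ks) :&: ((M :&: Ks) <*> Hs) \subset M.
Proof.
have [_ HK cHK tiHK] := dprodP defG.
have [nsHG nsKG] := dprod_normal2 defG.
have n1 := nsN1 defG maxM nHM nKM.
have n2 := nsN1 defG' maxM nKM nHM.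
rewrite norm_joinEr; last by rewrite (subset_trans (normal_sub nsKG)) ?normal_norm.
rewrite -group_modl; last by rewrite (subset_trans (subsetIr _ _)) ?joing_subr.
rewrite mul_subG ?subsetIl //.
rewrite /= norm_joinEr; last by rewrite (subset_trans (normal_sub nsHG)) ?normal_norm.
rewrite -(normC (A := Hs)); last by rewrite (subset_trans (normal_sub nsHG)) ?normal_norm.
rewrite -group_modr ?subsetIr // setIC tiHK mul1g subsetIl //.
Qed.

End Decomp2.

Unset Default Proof Using.

Section Prod.
Variables (gT1 gT2 : finGroupType) (H : {group gT1}) (K : {group gT2}).

Lemma pairM (a b : gT1 * gT2) : a * b = (a.1 * b.1, a.2 * b.2).
Proof. by []. Qed.
Lemma pair1 : (1 : gT1 * gT2) = (1, 1). Proof. by []. Qed.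
Lemma pairV (a : gT1 * gT2) : a^-1 = (a.1^-1, a.2^-1). Proof. by []. Qed.

Lemma fst_group (Z : {group (gT1 * gT2)}) : group_set (fst @: Z).
Proof.
apply/group_setP; split.
  by apply/imsetP; exists 1.
move=> a b /imsetP [x xZ ->] /imsetP [y yZ ->].
by apply/imsetP; exists (x * y); rewrite ?groupM.
Qed.

Lemma fstX (C : {set gT1}) : fst @: setX C K = C.
Proof.
apply/setP => c; apply/imsetP/idP.
  by case=> x; rewrite inE => /andP [h _] ->.
by move=> cC; exists (c, 1); rewrite // inE cC group1.
Qed.

Lemma Xfst (Z : {group (gT1 * gT2)}) :
  setX 1 K \subset Z -> Z \subset setX H K -> gval Z = setX (fst @: Z) K.
Proof.
move=> s1 s2; apply/setP => x; apply/idP/idP.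
  move=> xZ; rewrite inE; apply/andP; split.
    by apply/imsetP; exists x.
  by have := subsetP s2 x xZ; rewrite inE => /andP [].
rewrite inE => /andP [/imsetP [y yZ e] x2K].
have y2K : y.2 \in K by have := subsetP s2 y yZ; rewrite inE => /andP [].
have -> : x = y * (1, y.2^-1 * x.2).
  by case: x e x2K => [x1 x2] /= -> _; rewrite pairM /= mulg1 mulKVg.
rewrite groupM // (subsetP s1) // inE inE eqxx /=.
by rewrite groupM ?groupV.
Qed.

Lemma max_up (C : {set gT1}) : maximal C H -> maximal (setX C K) (setX H K).
Proof.
move=> mC; have [CG eC] := max_group mC; rewrite eC in mC *.
have [/andP [sCH nHC] mx] := maxgroupP mC.
apply/maxgroupP; split.
  rewrite /proper setXS //=; apply: contra nHC => h.
  by rewrite -(fstX H) -(fstX CG) imsetS.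
move=> Z /andP [sZG nGZ] sCZ.
have s1 : setX 1 K \subset Z.
  by apply: subset_trans sCZ; rewrite setXS ?sub1G.
have eZ := Xfst s1 sZG.
have gZ' := fst_group Z.
have sCZ' : CG \subset Group gZ'.
  by rewrite /= -(fstX CG) imsetS.
have sZ'H : Group gZ' \subset H.
  by rewrite /= -(fstX H) imsetS.
case e : (Group gZ' \proper H).
  by rewrite eZ (mx _ e sCZ').
exfalso; move: nGZ; apply/negP/negPn; rewrite eZ setXS //.
by move: e; rewrite /proper sZ'H /= => /negbFE.
Qed.

Lemma max_down (Z : {set (gT1 * gT2)}) :
  maximal Z (setX H K) -> setX 1 K \subset Z -> maximal (fst @: Z) H.
Proof.
move=> mZ s1; have [ZG eZ0] := max_group mZ; rewrite eZ0 in mZ s1 *.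
have [/andP [sZG nGZ] mx] := maxgroupP mZ.
have eZ := Xfst s1 sZG.
have gZ' := fst_group ZG.
have sZ'H : Group gZ' \subset H.
  by rewrite /= -(fstX H) imsetS.
have nHZ' : ~~ (H \subset Group gZ').
  apply: contra nGZ => h; rewrite eZ setXS //.
change (maximal (gval (Group gZ')) H).
apply/maxgroupP; split.
  by rewrite /proper sZ'H.
move=> C /andP [sCH nHC] sZ'C.
have p : setX_group C K \proper setX H K.
  rewrite /proper setXS //=; apply: contra nHC => h.
  by rewrite -(fstX H) -(fstX C) imsetS.
have sZC : ZG \subset setX_group C K.
  by rewrite eZ setXS.
have e := mx _ p sZC.
by rewrite /= -(fstX C) e.
Qed.

Lemma max_sub (X : {set (gT1 * gT2)}) (G : {set (gT1 * gT2)}) :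
  maximal X G -> X \subset G.
Proof.
move=> m; have [XG eX] := max_group m; rewrite eX in m *.
by case/maxgroupP: m => /andP [].
Qed.

Lemma proj1_bound (F : {set {set (gT1 * gT2)}}) :
  [forall X in F, maximal X (setX H K)] -> gen_pos (setX H K) F ->
  (forall X, X \in F -> setX 1 K \subset X) -> #|F| <= MaxDim H.
Proof.
move=> /forall_inP mF /gpP gF sF.
have key : forall X, X \in F -> forall x, x \in setX H K ->
    (x \in X) = (x.1 \in fst @: X).
  move=> X XF x xG; have mX := mF X XF; have s1 := sF X XF.
  have [XG eX] := max_group mX; rewrite eX in mX s1 *.
  rewrite {1}(Xfst s1 (max_sub mX)) inE.
  by move: xG; rewrite inE => /andP [_ ->]; rewrite andbT.
have inj : {in F &, injective (fun X : {set (gT1 * gT2)} => fst @: X)}.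
  move=> X Y XF YF e; apply/setP => x.
  case xG : (x \in setX H K); first by rewrite (key X XF x xG) (key Y YF x xG) e.
  rewrite (contraFF (subsetP (max_sub (mF X XF)) x) xG).
  by rewrite (contraFF (subsetP (max_sub (mF Y YF)) x) xG).
rewrite -(card_in_imset inj).
apply: MaxDim_ub.
  apply/forall_inP => X' /imsetP [X XF ->]; apply: max_down; [exact: mF | exact: sF].
apply/gpP => X' /imsetP [X XF ->].
have [g [gG gX gY]] := gF X XF.
exists g.1; split.
- by move: gG; rewrite inE => /andP [].
- by rewrite -(key X XF g gG).
move=> Y' /imsetP [Y YF ->] ne.
apply/imsetP; exists g => //; apply: gY => //; apply: contra ne => /eqP -> //.
Qed.

Lemma snd_group (Z : {group (gT1 * gT2)}) : group_set (snd @: Z).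
Proof.
apply/group_setP; split.
  by apply/imsetP; exists 1.
move=> a b /imsetP [x xZ ->] /imsetP [y yZ ->].
by apply/imsetP; exists (x * y); rewrite ?groupM.
Qed.

Lemma sndX (C : {set gT2}) : snd @: setX H C = C.
Proof.
apply/setP => c; apply/imsetP/idP.
  by case=> x; rewrite inE => /andP [_ h] ->.
by move=> cC; exists (1, c); rewrite // inE cC group1.
Qed.

Lemma Xsnd (Z : {group (gT1 * gT2)}) :
  setX H 1 \subset Z -> Z \subset setX H K -> gval Z = setX H (snd @: Z).
Proof.
move=> s1 s2; apply/setP => x; apply/idP/idP.
  move=> xZ; rewrite inE; apply/andP; split.
    by have := subsetP s2 x xZ; rewrite inE => /andP [].
  by apply/imsetP; exists x.
rewrite inE => /andP [x1H /imsetP [y yZ e]].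
have y1H : y.1 \in H by have := subsetP s2 y yZ; rewrite inE => /andP [].
have -> : x = (x.1 * y.1^-1, 1) * y.
  by case: x e x1H => [x1 x2] /= -> _; rewrite pairM /= mul1g mulgKV.
rewrite groupMr // (subsetP s1) // inE inE eqxx /= andbT.
by rewrite groupM ?groupV.
Qed.

Lemma max_up2 (C : {set gT2}) : maximal C K -> maximal (setX H C) (setX H K).
Proof.
move=> mC; have [CG eC] := max_group mC; rewrite eC in mC *.
have [/andP [sCK nKC] mx] := maxgroupP mC.
apply/maxgroupP; split.
  rewrite /proper setXS //=; apply: contra nKC => h.
  by rewrite -(sndX K) -(sndX CG) imsetS.
move=> Z /andP [sZG nGZ] sCZ.
have s1 : setX H 1 \subset Z.
  by apply: subset_trans sCZ; rewrite setXS ?sub1G.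
have eZ := Xsnd s1 sZG.
have gZ' := snd_group Z.
have sCZ' : CG \subset Group gZ'.
  by rewrite /= -(sndX CG) imsetS.
have sZ'K : Group gZ' \subset K.
  by rewrite /= -(sndX K) imsetS.
case e : (Group gZ' \proper K).
  by rewrite eZ (mx _ e sCZ').
exfalso; move: nGZ; apply/negP/negPn; rewrite eZ setXS //.
by move: e; rewrite /proper sZ'K /= => /negbFE.
Qed.

Lemma max_down2 (Z : {set (gT1 * gT2)}) :
  maximal Z (setX H K) -> setX H 1 \subset Z -> maximal (snd @: Z) K.
Proof.
move=> mZ s1; have [ZG eZ0] := max_group mZ; rewrite eZ0 in mZ s1 *.
have [/andP [sZG nGZ] mx] := maxgroupP mZ.
have eZ := Xsnd s1 sZG.
have gZ' := snd_group ZG.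
have sZ'K : Group gZ' \subset K.
  by rewrite /= -(sndX K) imsetS.
have nKZ' : ~~ (K \subset Group gZ').
  apply: contra nGZ => h; rewrite eZ setXS //.
change (maximal (gval (Group gZ')) K).
apply/maxgroupP; split.
  by rewrite /proper sZ'K.
move=> C /andP [sCK nKC] sZ'C.
have p : setX_group H C \proper setX H K.
  rewrite /proper setXS //=; apply: contra nKC => h.
  by rewrite -(sndX K) -(sndX C) imsetS.
have sZC : ZG \subset setX_group H C.
  by rewrite eZ setXS.
have e := mx _ p sZC.
by rewrite /= -(sndX C) e.
Qed.

Lemma proj2_bound (F : {set {set (gT1 * gT2)}}) :
  [forall X in F, maximal X (setX H K)] -> gen_pos (setX H K) F ->
  (forall X, X \in F -> setX H 1 \subset X) -> #|F| <= MaxDim K.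
Proof.
move=> /forall_inP mF /gpP gF sF.
have key : forall X, X \in F -> forall x, x \in setX H K ->
    (x \in X) = (x.2 \in snd @: X).
  move=> X XF x xG; have mX := mF X XF; have s1 := sF X XF.
  have [XG eX] := max_group mX; rewrite eX in mX s1 *.
  rewrite {1}(Xsnd s1 (max_sub mX)) inE.
  by move: xG; rewrite inE => /andP [-> _].
have inj : {in F &, injective (fun X : {set (gT1 * gT2)} => snd @: X)}.
  move=> X Y XF YF e; apply/setP => x.
  case xG : (x \in setX H K); first by rewrite (key X XF x xG) (key Y YF x xG) e.
  rewrite (contraFF (subsetP (max_sub (mF X XF)) x) xG).
  by rewrite (contraFF (subsetP (max_sub (mF Y YF)) x) xG).
rewrite -(card_in_imset inj).
apply: MaxDim_ub.
  apply/forall_inP => X' /imsetP [X XF ->]; apply: max_down2; [exact: mF | exact: sF].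
apply/gpP => X' /imsetP [X XF ->].
have [g [gG gX gY]] := gF X XF.
exists g.2; split.
- by move: gG; rewrite inE => /andP [].
- by rewrite -(key X XF g gG).
move=> Y' /imsetP [Y YF ->] ne.
apply/imsetP; exists g => //; apply: gY => //; apply: contra ne => /eqP -> //.
Qed.

Lemma lower : MaxDim H + MaxDim K <= MaxDim (setX H K).
Proof.
have [F1 [/forall_inP m1 /gpP g1 c1]] := MaxDim_ex H.
have [F2 [/forall_inP m2 /gpP g2 c2]] := MaxDim_ex K.
rewrite -c1 -c2.
set A := [set setX X K | X in F1]; set B := [set setX H Y | Y in F2].
have inj1 : {in F1 &, injective (fun X : {set gT1} => setX X K)}.
  by move=> X Y _ _ e; rewrite -(fstX X) -(fstX Y) /= e.
have inj2 : {in F2 &, injective (fun Y : {set gT2} => setX H Y)}.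
  by move=> X Y _ _ e; rewrite -(sndX X) -(sndX Y) /= e.
have neq : forall X Y, X \in F1 -> Y \in F2 -> setX X K != setX H Y.
  move=> X Y XF YF; apply/eqP => e.
  have [XG eX] := max_group (m1 X XF); have mX := m1 X XF; rewrite eX in mX e.
  have [/andP [_ nHX] _] := maxgroupP mX.
  have [YG eY] := max_group (m2 Y YF).
  move: nHX; apply/negP/negPn; apply/subsetP => h hH.
  have : (h, 1) \in setX H Y by rewrite inE /= hH eY group1.
  by rewrite -e inE /= => /andP [].
have dAB : A :&: B = set0.
  apply/setP => Z; rewrite !inE; apply/negP => /andP [/imsetP [X XF ->] /imsetP [Y YF e]].
  by move: (neq X Y XF YF); rewrite e eqxx.
have -> : #|F1| + #|F2| = #|A :|: B|.
  by rewrite cardsU dAB cards0 subn0 !card_in_imset.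
apply: MaxDim_ub.
  apply/forall_inP => Z; rewrite inE => /orP [/imsetP [X XF ->]|/imsetP [Y YF ->]].
    exact: max_up (m1 X XF).
  exact: max_up2 (m2 Y YF).
apply/gpP => Z; rewrite inE => /orP [/imsetP [X XF ->]|/imsetP [Y YF ->]].
  have [h [hH hX hY]] := g1 X XF.
  exists (h, 1); split.
  - by rewrite inE /= hH group1.
  - by rewrite inE /= (negbTE hX).
  move=> W; rewrite inE => /orP [/imsetP [Y YF ->]|/imsetP [Y YF ->]] ne.
    have YX : Y != X by apply: contra ne => /eqP ->.
    by rewrite inE /= (hY Y YF YX) group1.
  have [YG eY] := max_group (m2 Y YF).
  by rewrite inE /= hH eY group1.
have [k [kK kY kW]] := g2 Y YF.
exists (1, k); split.
- by rewrite inE /= kK group1.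
- by rewrite inE /= (negbTE kY) andbF.
move=> W; rewrite inE => /orP [/imsetP [X XF ->]|/imsetP [X XF ->]] ne.
  have [XG eX] := max_group (m1 X XF).
  by rewrite inE /= kK eX group1.
have XY : X != Y by apply: contra ne => /eqP ->.
by rewrite inE /= (kW X XF XY) group1.
Qed.

Lemma upper (sol : solvable H || solvable K) n : forall F : {set {set (gT1 * gT2)}},
  #|[set X in F | ~~ (setX 1 K \subset X) && ~~ (setX H 1 \subset X)]| <= n ->
  [forall X in F, maximal X (setX H K)] -> gen_pos (setX H K) F ->
  #|F| <= MaxDim H + MaxDim K.
Proof.
set Hs := setX_group H [1 gT2]%G; set Ks := setX_group [1 gT1]%G K.
have defG : Hs \x Ks = setX_group H K := setX_dprod H K.
have defG2 : Ks \x Hs = setX_group H K by rewrite dprodC.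
have solH : solvable Hs = solvable H by symmetry; apply: isog_sol; exact: isog_setX1.
have solK : solvable Ks = solvable K by symmetry; apply: isog_sol; exact: isog_set1X.
have sol1 : solvable Hs || solvable Ks by rewrite solH solK.
have sol2 : solvable Ks || solvable Hs by rewrite orbC.
elim: n => [|n IH] F ct mF gF.
  have T0 : forall X, X \in F -> ~~ (setX 1 K \subset X) -> setX H 1 \subset X.
    move=> X XF nK; apply/negPn/negP => nH.
    move: ct; rewrite leqn0 cards_eq0 => /eqP /setP /(_ X).
    by rewrite !inE XF nK nH.
  set P := [set X : {set (gT1 * gT2)} | setX 1 K \subset X].
  rewrite -(cardsID P F); apply: leq_add.
    apply: proj1_bound.
    - apply/forall_inP => X; rewrite inE => /andP [XF _].
      exact: (forall_inP mF).
    - exact: subfam_gp (subsetIl _ _) gF.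
    - by move=> X; rewrite !inE => /andP [].
  apply: proj2_bound.
  - apply/forall_inP => X; rewrite inE => /andP [_ XF].
    exact: (forall_inP mF).
  - exact: subfam_gp (subsetDl _ _) gF.
  - by move=> X; rewrite !inE => /andP [nK XF]; apply: T0.
set T := [set X in F | _] in ct.
case: (leqP #|T| n) => [le|lt]; first exact: IH.
have [M MT] : exists M, M \in T by apply/card_gt0P; apply: leq_ltn_trans lt.
move: (MT); rewrite inE => /and3P [MF nKM nHM].
have mM := forall_inP mF M MF.
have [MG eM] := max_group mM; rewrite eM in mM nKM nHM.
have [r [rG rM rY]] := (iffLR (gpP _ _) gF) M MF.
rewrite eM in rM.
have [n1 m1 s1] := M1_props defG mM nHM nKM sol1.
have [n2 m2 s2] := M1_props defG2 mM nKM nHM sol2.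
have s12 := M12_sub defG mM nHM nKM.
have [M' [nM' mM' rM' tM']] : exists M' : {group (gT1 * gT2)},
   [/\ M' <| setX_group H K, maximal M' (setX_group H K), r \notin M'
     & (setX 1 K \subset M') || (setX H 1 \subset M')].
  case r1 : (r \in (MG :&: Hs) <*> Ks).
    case r2 : (r \in (MG :&: Ks) <*> Hs).
      by move: rM; rewrite (subsetP s12) // inE r1 r2.
    by exists ((MG :&: Ks) <*> Hs)%G; rewrite r2 s2 orbT.
  by exists ((MG :&: Hs) <*> Ks)%G; rewrite r1 s1.
have [mF' gF' cF'] := exchange mF gF MF nM' mM' rG rM' rY.
rewrite -cF'; apply: IH => //.
have sub : [set X in gval M' |: (F :\ M) | ~~ (setX 1 K \subset X) && ~~ (setX H 1 \subset X)]
    \subset T :\ M.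
  apply/subsetP => X; rewrite !inE => /andP [/orP [/eqP ->|/andP [XM XF]] /andP [nK nH]].
    by move: tM'; rewrite (negbTE nK) (negbTE nH).
  by rewrite XM XF nK nH.
apply: leq_trans (subset_leq_card sub) _.
by move: ct; rewrite (cardsD1 M T) MT /= add1n ltnS.
Qed.

End Prod.

Theorem corollary2p4 (gT1 gT2 : finGroupType) (H : {group gT1}) (K : {group gT2}) :
  solvable H || solvable K ->
  MaxDim (setX H K) = MaxDim H + MaxDim K.
Proof.
move=> sol; apply/eqP; rewrite eqn_leq lower andbT.
have [F [mF gF cF]] := MaxDim_ex (setX H K); rewrite -cF.
exact: (upper sol (leqnn _) mF gF).
Qed.
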